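(* The Fitting subgroup functorial $\mathrm{F}:G\mapsto\mathrm{F}(G)$ is the unique $\mathbb{F}$-functorial in the class of all finite soluble groups; that is, if $\gamma$ is a functorial which satisfies (F1)–(F4) for every finite soluble group $G$, then $\gamma(G)=\mathrm{F}(G)$ for every finite soluble group $G$.
   Context: All groups are finite. A functorial is a function $\theta$ assigning to each group $G$ a characteristic subgroup $\theta(G)$ such that $f(\theta(G))=\theta(f(G))$ for every isomorphism $f:G\to G^*$. For a normally hereditary homomorph $\mathfrak{X}$, a functorial $\gamma$ is an $\mathbb{F}$-functorial in $\mathfrak{X}$ if for every $\mathfrak{X}$-group $G$: (F1) $f(\gamma(G))\subseteq\gamma(f(G))$ for every epimorphism $f:G\to G^*$; (F2) $\gamma(N)\subseteq\gamma(G)$ for every $N\trianglelefteq G$; (F3) $C_G(\gamma(G))\subseteq\gamma(G)$; (F4) $\gamma(G)/\Phi(G)\subseteq\mathrm{Soc}(G/\Phi(G))$. $\mathrm{F}(G)$ is the Fitting subgroup. *)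

(* Defs.v *)
From mathcomp Require Import all_boot all_fingroup all_solvable.
Set Implicit Arguments. Unset Strict Implicit. Unset Printing Implicit Defensive.
Import GroupScope.
Local Open Scope group_scope.

Definition socle (gT : finGroupType) (G : {set gT}) : {set gT} :=
  << \bigcup_(M : {group gT} | minnormal M G) M >>.

Definition functorial
  (theta : forall gT : finGroupType, {group gT} -> {group gT}) : Prop :=
  (forall (gT : finGroupType) (G : {group gT}), theta gT G \char G) /\
  (forall (gT rT : finGroupType) (G : {group gT}) (f : {morphism G >-> rT}),
      isom G (f @* G) f -> f @* theta gT G = theta rT (f @* G)).

Definition F_functorial_soluble
  (gamma : forall gT : finGroupType, {group gT} -> {group gT}) : Prop :=
  [/\
      (forall (gT rT : finGroupType) (G : {group gT}) (f : {morphism G >-> rT}),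
          solvable G -> f @* gamma gT G \subset gamma rT (f @* G)),
      (forall (gT : finGroupType) (G N : {group gT}),
          solvable G -> N <| G -> gamma gT N \subset gamma gT G),
      (forall (gT : finGroupType) (G : {group gT}),
          solvable G -> 'C_G(gamma gT G) \subset gamma gT G) &
      (forall (gT : finGroupType) (G : {group gT}),
          solvable G -> gamma gT G / 'Phi(G) \subset socle (G / 'Phi(G)))].

(* Main.v *)
Require Import Defs.
From mathcomp Require Import all_boot all_fingroup all_solvable.
Import GroupScope.
Local Open Scope group_scope.

Lemma phi_nil_fit (gT : finGroupType) (G H : {group gT}) :
  H <| G -> nilpotent (H / 'Phi(G)) -> H \subset 'F(G).
Proof.
move=> nHG nilHq.
have nPhiG := Phi_normal G.
have nPhi := normal_norm nPhiG.
set K := ('Phi(G) <*> H)%G.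
have nKG : K <| G by apply: normalY.
have sKG : K \subset G := normal_sub nKG.
have nPK : K \subset 'N('Phi(G)) := subset_trans sKG nPhi.
apply: subset_trans (joing_subr 'Phi(G) H) _.
rewrite -(Sylow_gen K) gen_subG; apply/bigcupsP => P /SylowP [p pr_p sylP].
have sPK := pHall_sub sylP.
have sPG : P \subset G := subset_trans sPK sKG.
suff nPG : P <| G by apply: Fitting_max nPG (pgroup_nil (pHall_pgroup sylP)).
rewrite /normal sPG /=.
have nKq : nilpotent (K / 'Phi(G)).
  by rewrite quotientYidl // (subset_trans (normal_sub nHG) nPhi).
have sylPq : p.-Sylow(K / 'Phi(G)) (P / 'Phi(G)).
  exact: quotient_pHall (subset_trans sPK nPK) sylP.
have defPq : P / 'Phi(G) = 'O_p(K / 'Phi(G)) := nilpotent_Hall_pcore nKq sylPq.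
have nPq : P / 'Phi(G) <| G / 'Phi(G).
  by rewrite defPq; apply: char_normal_trans (pcore_char _ _) (quotient_normal _ nKG).
set L := ('Phi(G) <*> P)%G.
have defL : L :=: 'Phi(G) * P by rewrite /= norm_joinEr // (subset_trans sPK nPK).
have nLG : L <| G.
  have := nPq; rewrite -cosetpre_normal quotientK ?(subset_trans sPK nPK) //.
  by rewrite quotientGK // defL.
have sLK : L \subset K by rewrite join_subG joing_subl sPK.
have sylPL : p.-Sylow(L) P := pHall_subl (joing_subr _ _) sLK sylP.
have defG := Frattini_arg nLG sylPL.
have sPN : P \subset 'N_G(P) by rewrite subsetI sPG normG.
have defG2 : 'Phi(G) * 'N_G(P) = G.
  by rewrite -[in RHS]defG defL -mulgA (mulSGid sPN).
have defG3 : 'Phi(G) <*> 'N_G(P) = G.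
  apply/eqP; rewrite eqEsubset join_subG Phi_sub subsetIl /=.
  by rewrite -{1}defG2 mul_subG ?joing_subl ?joing_subr.
have := Phi_nongen defG3; rewrite genGid => defN.
by rewrite -defN subsetIr.
Qed.

Lemma socle_fit (gT : finGroupType) (X : {group gT}) :
  solvable X -> (forall M : {group gT}, M \subset X) -> socle X \subset 'F(X).
Proof.
move=> solX hX; rewrite /socle gen_subG; apply/bigcupsP => M minM.
have [nMX _ /is_abelemP [p _ abM]] := minnormal_solvable minM (hX M) solX.
by apply: Fitting_max; rewrite ?/normal ?hX // abelian_nil // (abelem_abelian abM).
Qed.

Lemma nil_gamma (gamma : forall gT : finGroupType, {group gT} -> {group gT}) :
  functorial gamma -> F_functorial_soluble gamma ->
  forall n (gT : finGroupType) (G : {group gT}), #|G| <= n -> nilpotent G ->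
    gamma gT G = G :> {set gT}.
Proof.
move=> [chr _] [_ F2 F3 _]; elim=> [|n IH] gT G.
  by rewrite leqn0 cards_eq0 => /eqP G0; have := group1 G; rewrite G0 inE.
move=> cardG nilG; have solG := nilpotent_sol nilG.
have sgG := char_sub (chr gT G).
apply/eqP; rewrite eqEsubset sgG /=; apply/subsetP => x Gx.
have sxG : <[x]> \subset G by rewrite cycle_subG.
have [defX | [M maxM sxM]] := maximal_exists sxG.
  have abG : abelian G by rewrite -defX cycle_abelian.
  apply: (subsetP (F3 _ _ solG)); rewrite inE Gx /=.
  apply: (subsetP _ x (subsetP abG x Gx)); apply: centS sgG.
have /maxgroupP [prM maxM'] := maxM.
have nMG : M <| G.
  rewrite /normal (proper_sub prM); apply/subsetP => y Gy.
  have prN := nilpotent_proper_norm nilG prM.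
  have := maxM' ('N_G(M))%G; rewrite subsetI (proper_sub prM) normG => /(_ _ isT) eqN.
  case: (boolP ('N_G(M) \proper G)) => [/eqN eqNM|].
    by move: prN; rewrite eqNM properE subxx.
  rewrite properEneq subsetIl andbT negbK => /eqP defN.
  by move: Gy; rewrite -defN inE => /andP[].
have cardM : #|M| <= n by rewrite -ltnS (leq_trans (proper_card prM)).
have eqM := IH _ M cardM (nilpotentS (proper_sub prM) nilG).
apply: (subsetP (F2 _ _ _ solG nMG)); rewrite eqM.
by apply: (subsetP sxM); rewrite cycle_id.
Qed.

Theorem theorem2
  (gamma : forall gT : finGroupType, {group gT} -> {group gT}) :
  functorial gamma -> F_functorial_soluble gamma ->
  forall (gT : finGroupType) (G : {group gT}), solvable G ->
    gamma gT G = 'F(G) :> {set gT}.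
Proof.
move=> fg Fg gT G solG.
have [chr iso] := fg; have [F1 F2 F3 F4] := Fg.
apply/eqP; rewrite eqEsubset; apply/andP; split; last first.
  have nFG := Fitting_normal G.
  rewrite -{1}(nil_gamma _ fg Fg _ _ _ (leqnn _) (Fitting_nil G)).
  exact: F2 _ _ _ solG nFG.
have injf := injm_subg G.
have isof : isom G (subg G @* G) (subg G) by apply/isomP.
have eqg := iso _ _ G _ isof.
rewrite -(injmSK injf _ (char_sub (chr _ G))) eqg injm_Fitting //.
set G' := (subg G @* G)%G.
have solG' : solvable G' by apply: morphim_sol.
apply: phi_nil_fit; first exact: char_normal (chr _ _).
apply: nilpotentS (F4 _ _ solG') _.
apply: nilpotentS (Fitting_nil _).
apply: socle_fit; first exact: quotient_sol.
move=> M; apply: subset_trans (subsetT M) _.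
rewrite -(quotientT 'Phi(G')); apply: quotientS.
by rewrite /= im_subg.
Qed.
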